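(* A commutative semigroup $S$ has a non-universal monoid congruence if and only if $S$ has a subset $A$ with $\emptyset\neq A\neq S$ such that $\mathrm{Sep}\,A\neq\emptyset$.
   Context: For a semigroup $S$ and $A\subseteq S$, $\mathrm{Sep}\,A$ (the separator of $A$) is the set of all $x\in S$ with $xA\subseteq A$, $Ax\subseteq A$, $x(S\setminus A)\subseteq S\setminus A$ and $(S\setminus A)x\subseteq S\setminus A$. A congruence $p$ on $S$ is a monoid congruence if the factor semigroup $S/p$ has an identity element; it is universal if $p=S\times S$. *)

(* Defs.v *)
Definition associative {S : Type} (op : S -> S -> S) : Prop :=
  forall x y z, op (op x y) z = op x (op y z).

Definition commutative {S : Type} (op : S -> S -> S) : Prop :=
  forall x y, op x y = op y x.

Definition congruence {S : Type} (op : S -> S -> S) (p : S -> S -> Prop) : Prop :=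
  (forall x, p x x) /\
  (forall x y, p x y -> p y x) /\
  (forall x y z, p x y -> p y z -> p x z) /\
  (forall x y z, p x y -> p (op z x) (op z y) /\ p (op x z) (op y z)).

(* The factor semigroup S/p has an identity element: some class [e]
   with [e][x] = [x][e] = [x] for all x. *)
Definition monoid_congruence {S : Type} (op : S -> S -> S) (p : S -> S -> Prop) : Prop :=
  congruence op p /\ exists e, forall x, p (op e x) x /\ p (op x e) x.

Definition universal {S : Type} (p : S -> S -> Prop) : Prop :=
  forall x y, p x y.

Definition Sep {S : Type} (op : S -> S -> S) (A : S -> Prop) (x : S) : Prop :=
  (forall a, A a -> A (op x a)) /\
  (forall a, A a -> A (op a x)) /\
  (forall b, ~ A b -> ~ A (op x b)) /\
  (forall b, ~ A b -> ~ A (op b x)).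

(* Main.v *)
Require Import Defs.
From Stdlib Require Import Classical.

Lemma sep_iff (S : Type) (op : S -> S -> S) (A : S -> Prop) x u :
  Sep op A x -> (A (op x u) <-> A u).
Proof.
  intros [H1 [H2 [H3 H4]]]; split; intro H.
  - apply NNPP; intro Hn; exact (H3 u Hn H).
  - now apply H1.
Qed.

Theorem corollary5 (S : Type) (op : S -> S -> S)
  (Hassoc : associative op) (Hcomm : commutative op) :
  (exists p : S -> S -> Prop, monoid_congruence op p /\ ~ universal p) <->
  (exists A : S -> Prop,
      (exists a, A a) /\ (exists b, ~ A b) /\ (exists x, Sep op A x)).
Proof.
  split.
  - intros [p [[[Hr [Hs [Ht Hc]]] [e He]] Hnu]].
    exists (fun a => p e a). split; [exists e; apply Hr|]. split.
    + apply NNPP; intro Hn. apply Hnu; intros u v.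
      assert (Hall : forall z, p e z).
      { intro z; apply NNPP; intro H; apply Hn; exists z; exact H. }
      apply Ht with e; [apply Hs|]; apply Hall.
    + exists e. unfold Sep; repeat split.
      * intros a Ha. apply Ht with a; [exact Ha| apply Hs, He].
      * intros a Ha. apply Ht with a; [exact Ha| apply Hs, He].
      * intros b Hb H. apply Hb. apply Ht with (op e b); [exact H|apply He].
      * intros b Hb H. apply Hb. apply Ht with (op b e); [exact H|apply He].
  - intros [A [[a Ha] [[b Hb] [x Hx]]]].
    exists (fun u v => (A u <-> A v) /\ forall s, (A (op s u) <-> A (op s v))).
    split.
    + split.
      * unfold congruence. split; [|split; [|split]].
        -- intro u; split; [tauto|intro s; tauto].
        -- intros u v [H1 H2]; split; [tauto|intro s; specialize (H2 s); tauto].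
        -- intros u v w [H1 H2] [H3 H4]; split; [tauto|intro s; specialize (H2 s); specialize (H4 s); tauto].
        -- intros u v z [H1 H2]; split; split.
           ++ apply H2.
           ++ intro s; rewrite <- !Hassoc; apply H2.
           ++ rewrite (Hcomm u z), (Hcomm v z); apply H2.
           ++ intro s; rewrite (Hcomm u z), (Hcomm v z), <- !Hassoc; apply H2.
      * exists x. intro u.
        assert (K : forall s, A (op s (op x u)) <-> A (op s u)).
        { intro s. rewrite <- Hassoc, (Hcomm s x), Hassoc. apply sep_iff; exact Hx. }
        split; split; try exact K; try (apply sep_iff; exact Hx);
          rewrite (Hcomm u x); [apply sep_iff; exact Hx | exact K].
    + intro Hu. destruct (Hu a b) as [H _]. tauto.
Qed.
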